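(* Let $(G,\rho)$ be a ribbon graph and $v\in V(G)$ with $\rho_v=(e_1,\dots,e_{i+j})$, $i,j\ge1$. Assume that for all $1\le k\le i$ and $i+1\le l\le i+j$, the edges $e_k$ and $e_l$ lie in different $v$-components of $(G,\rho)$. Let $(G',\rho')$ be the union of all $v$-components containing some edge of $\{e_1,\dots,e_i\}$ and $(G'',\rho'')$ the union of all $v$-components containing some edge of $\{e_{i+1},\dots,e_{i+j}\}$, with cyclic orders restricted from $\rho$. Then the genus of $(G,\rho)$ equals the genus of $(G',\rho')$ plus the genus of $(G'',\rho'')$.
   Context: Graphs are finite, connected, loopless, possibly with multiple edges. A ribbon graph $(G,\rho)$ assigns to each vertex $u$ a cyclic order $\rho_u$ on incident edges. For a vertex $v$, a $v$-component is the full ribbon subgraph induced on the vertices of a connected component of $G\setminus v$ together with $v$. Genus: a cycle of a ribbon graph is a closed walk which, whenever it enters a vertex $u$ along an edge $e$, leaves along the edge following $e$ in $\rho_u$; with $\operatorname{cyc}$ the number of cycles, the genus $g$ satisfies $2g=2-|V|+|E|-\operatorname{cyc}$. *)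

(* Defs.v *)
(* Ribbon graphs as in the paper: finite vertex/edge types,
   each (loopless) edge has two ends, rho u is a cyclic permutation of the
   edges incident to u (and fixes all other edges). *)
From mathcomp Require Import all_boot all_order all_algebra all_fingroup.
Set Implicit Arguments. Unset Strict Implicit. Unset Printing Implicit Defensive.
Import GRing.Theory Num.Theory.

Record ribbon_graph := RibbonGraph {
  rV : finType;
  rE : finType;
  ends : rE -> rV * rV;
  rho : rV -> {perm rE} }.

Section RG.
Variable G : ribbon_graph.

Definition incident (u : rV G) (e : rE G) : bool :=
  ((ends e).1 == u) || ((ends e).2 == u).

Definition gadj : rel (rV G) :=
  fun x y => [exists e, (ends e == (x, y)) || (ends e == (y, x))].

Definition is_ribbon_graph : Prop :=
  [/\ forall e : rE G, (ends e).1 != (ends e).2,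
      forall x y : rV G, connect gadj x y,
      forall (u : rV G) (e : rE G), ~~ incident u e -> rho u e = e
    & forall (u : rV G) (e1 e2 : rE G), incident u e1 -> incident u e2 ->
        exists k, iter k (rho u) e1 = e2].

(* darts: (e, false) traverses e from (ends e).1 to (ends e).2,
          (e, true)  traverses e from (ends e).2 to (ends e).1 *)
Definition dhead (d : rE G * bool) : rV G :=
  if d.2 then (ends d.1).1 else (ends d.1).2.

(* the cyclic order rho u restricted to the edge set Es:
   the first edge of Es following e in rho u *)
Definition next_in (Es : {set rE G}) (u : rV G) (e : rE G) : rE G :=
  let s := [seq iter k.+1 (rho u) e | k <- iota 0 #|rE G|] in
  nth e s (find (fun x => x \in Es) s).

(* one step of a cycle (face) walk in the sub-ribbon graph with edges Es:
   entering u along e, leave along the edge following e in the restricted order *)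
Definition face_step (Es : {set rE G}) (d : rE G * bool) : rE G * bool :=
  let u := dhead d in
  let e' := next_in Es u d.1 in
  (e', (ends e').2 == u).

Definition darts_of (Es : {set rE G}) : {set rE G * bool} :=
  [set d | d.1 \in Es].

(* number of cycles: orbits of the face walk on darts; convention: an
   edgeless (single-vertex) graph has one (trivial) cycle *)
Definition ncycles (Es : {set rE G}) : nat :=
  if Es == set0 then 1%N else
  #|[set [set y | fconnect (face_step Es) x y] | x in darts_of Es]|.

Definition genus_sub (Vs : {set rV G}) (Es : {set rE G}) : rat :=
  (2 - #|Vs|%:R + #|Es|%:R - (ncycles Es)%:R) / 2.

Definition genus : rat := genus_sub [set: rV G] [set: rE G].

Definition adj_minus (v : rV G) : rel (rV G) :=
  fun x y => [&& x != v, y != v & gadj x y].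

Definition vcompV (v w : rV G) : {set rV G} :=
  v |: [set x | (x != v) && connect (adj_minus v) w x].

Definition vcomps (v : rV G) : {set {set rV G}} :=
  [set vcompV v w | w in [set w | w != v]].

Definition induced_E (W : {set rV G}) : {set rE G} :=
  [set e | ((ends e).1 \in W) && ((ends e).2 \in W)].

Definition union_V (v : rV G) (es : seq (rE G)) : {set rV G} :=
  \bigcup_(C in vcomps v | has (fun e => e \in induced_E C) es) C.
Definition union_E (v : rV G) (es : seq (rE G)) : {set rE G} :=
  \bigcup_(C in vcomps v | has (fun e => e \in induced_E C) es) induced_E C.

End RG.

(* Main.v *)
Require Import Defs.
From mathcomp Require Import all_boot all_order all_algebra all_fingroup.
From mathcomp Require Import zify lra.
Set Implicit Arguments. Unset Strict Implicit. Unset Printing Implicit Defensive.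


Section Gen.
Variable T : finType.

Definition Orb (h : T -> T) (A : {set T}) :=
  [set [set y | fconnect h x y] | x in A].

Lemma fconnect_iterP (h : T -> T) x y :
  reflect (exists n, iter n h x = y) (fconnect h x y).
Proof.
apply: (iffP idP) => [H|[n <-]]; last exact: fconnect_iter.
by exists (findex h x y); apply: iter_findex.
Qed.

Lemma Orb_perm (s : {perm T}) : Orb s [set: T] = porbits s.
Proof.
apply/setP => X; apply/imsetP/imsetP => -[x _ ->]; exists x => //;
  apply/setP => y; rewrite inE.
- apply/fconnect_iterP/porbitP => -[n e]; subst; exists n => //; by rewrite permX.
- apply/porbitP/fconnect_iterP => -[n e]; subst; exists n => //; by rewrite permX.
Qed.

Lemma Orb_permA (s : {perm T}) (A : {set T}) : (forall x, x \in A) -> Orb s A = porbits s.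
Proof.
move=> hA; rewrite -Orb_perm; congr (Orb _ _); apply/setP => x; by rewrite hA inE.
Qed.

Lemma iter_agree (h h' : T -> T) (A : {set T}) :
  {in A, h =1 h'} -> {in A, forall x, h x \in A} ->
  forall n x, x \in A -> iter n h x = iter n h' x /\ iter n h x \in A.
Proof.
move=> hh hA; elim=> [|n IH] x xA //=.
have [e1 e2] := IH x xA; rewrite -e1 hh //; split => //.
by rewrite -hh // hA.
Qed.

Lemma Orb_agree (h h' : T -> T) (A : {set T}) :
  {in A, h =1 h'} -> {in A, forall x, h x \in A} -> Orb h A = Orb h' A.
Proof.
move=> hh hA; apply/setP => X; apply/imsetP/imsetP => -[x xA ->]; exists x => //;
  apply/setP => y; rewrite !inE.
- apply/fconnect_iterP/fconnect_iterP => -[n <-]; exists n;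
  by have [] := iter_agree hh hA n xA.
- apply/fconnect_iterP/fconnect_iterP => -[n <-]; exists n;
  by have [] := iter_agree hh hA n xA.
Qed.

Lemma Orb_split (s : {perm T}) (A : {set T}) :
  {in A, forall x, s x \in A} -> {in ~: A, forall x, s x \in ~: A} ->
  #|porbits s| = #|Orb s A| + #|Orb s (~: A)|.
Proof.
move=> hA hB; rewrite -Orb_perm /Orb -(setUCr A) imsetU cardsU.
suff -> : [set [set y | fconnect s x y] | x in A] :&:
          [set [set y | fconnect s x y] | x in ~: A] = set0.
  by rewrite cards0 subn0.
apply/setP => X; rewrite !inE; apply/negP => /andP[/imsetP[a aA ->]].
move=> /imsetP[b bB] /setP/(_ b); rewrite !inE connect0 => /fconnect_iterP[n e].
have [_ /=] := iter_agree (h := s) (h' := s) (A := A) (fun _ _ => erefl) hA n aA.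
by rewrite e; move: bB; rewrite inE => /negbTE ->.
Qed.

End Gen.


Section G1.
Variable G : ribbon_graph.
Hypothesis HG : is_ribbon_graph G.

Lemma loopless (e : rE G) : (ends e).1 != (ends e).2.
Proof. by case: HG. Qed.

Lemma rho_inc (u : rV G) (e : rE G) : incident u e -> incident u (rho u e).
Proof.
move=> ie; apply: contraT => ni.
have := (let: And4 _ _ h _ := HG in h) u _ ni.
move=> /perm_inj ee; by rewrite ee ie in ni.
Qed.

Lemma dhead_inc (d : rE G * bool) : incident (dhead d) d.1.
Proof. by rewrite /dhead /incident; case: d.2; rewrite eqxx ?orbT. Qed.

Lemma next_inE (Es : {set rE G}) (u : rV G) (e : rE G) m : (m < #|rE G|)%N -> iter m.+1 (rho u) e \in Es ->
  (forall m', (m' < m)%N -> iter m'.+1 (rho u) e \notin Es) ->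
  next_in Es u e = iter m.+1 (rho u) e.
Proof.
move=> mN inm before; rewrite /next_in.
set s := map _ _.
have ns : size s = #|rE G| by rewrite size_map size_iota.
have nth_s k : (k < #|rE G|)%N -> nth e s k = iter k.+1 (rho u) e.
  by move=> kN; rewrite (nth_map 0) ?size_iota // nth_iota.
suff -> : find (fun x => x \in Es) s = m by rewrite nth_s.
have hs : has (fun x => x \in Es) s.
  by apply/hasP; exists (nth e s m); [apply: mem_nth; rewrite ns | rewrite nth_s].
case: (ltngtP (find (fun x => x \in Es) s) m) => // h.
- have := nth_find e hs; rewrite nth_s ?(ltn_trans h) //.
  by rewrite (negbTE (before _ h)).
- have := before_find e h; by rewrite nth_s // inm.
Qed.

Lemma next_in_mem (Es : {set rE G}) (u : rV G) (e : rE G) : e \in Es -> next_in Es u e \in Es.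
Proof.
move=> eE; rewrite /next_in; set s := map _ _.
suff hs : has (fun x => x \in Es) s by apply: (nth_find e hs).
have [n [n0 nN it]] : exists n, [/\ (0 < n)%N, (n <= #|rE G|)%N & iter n (rho u) e = e].
  exists #|porbit (rho u) e|; split; last exact: iter_porbit.
  - by rewrite lt0n card_porbit_neq0.
  - exact: max_card.
have kN : (n.-1 < #|rE G|)%N by lia.
apply/hasP; exists (nth e s n.-1).
  by apply: mem_nth; rewrite /s size_map size_iota.
rewrite /s (nth_map 0) ?size_iota //.
rewrite nth_iota // add0n prednK // it //.
Qed.

Lemma face_step_darts (Es : {set rE G}) d : d \in darts_of Es -> face_step Es d \in darts_of Es.
Proof. rewrite !inE /face_step /= => h; exact: next_in_mem. Qed.

Lemma next_in_rho (Es : {set rE G}) (u : rV G) (e : rE G) : rho u e \in Es -> next_in Es u e = rho u e.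
Proof.
move=> h; apply: (@next_inE _ _ _ 0) => //.
by apply/card_gt0P; exists e.
Qed.

Lemma inc_eq (e : rE G) (u1 u2 : rV G) : incident u1 e -> incident u2 e ->
  ((ends e).2 == u1) = ((ends e).2 == u2) -> u1 = u2.
Proof.
rewrite /incident; have := loopless e; case: (ends e) => a b /= nab.
case/orP => /eqP h1; case/orP => /eqP h2; subst => //;
  rewrite ?eqxx ?(negbTE nab) // eq_sym ?(negbTE nab) //.
Qed.

Lemma face_inj : injective (face_step [set: rE G]).
Proof.
move=> d1 d2; rewrite /face_step !next_in_rho ?inE //.
set u1 := dhead d1; set u2 := dhead d2.
have i1 := rho_inc (dhead_inc d1); have i2 := rho_inc (dhead_inc d2).
move: i1 i2; rewrite -/u1 -/u2 => i1 i2.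
case=> ee eb.
have eu : u1 = u2.
  rewrite ee in i1 eb; apply: (inc_eq i1 i2 eb).
rewrite -eu in ee; move/perm_inj: ee => e1.
move: eu; rewrite /u1 /u2 /dhead e1; clear u1 u2 i1 i2 eb.
case: d1 d2 e1 => [a1 b1] [a2 b2] /= ->.
have := loopless a2.
by case: b1; case: b2 => // nl e; rewrite e eqxx in nl.
Qed.

End G1.


Section G2.
Variable G : ribbon_graph.
Hypothesis HG : is_ribbon_graph G.
Variable v : rV G.

Notation Rv := (connect (adj_minus v)).
Definition wv (e : rE G) := if (ends e).1 != v then (ends e).1 else (ends e).2.
Definition Pv (s : seq (rE G)) (x : rV G) := has (fun e0 => Rv (wv e0) x) s.

Lemma gadj_sym : symmetric (@gadj G).
Proof.
move=> x y; apply/existsP/existsP => -[e h]; exists e; by rewrite orbC.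
Qed.

Lemma adj_minus_sym : symmetric (adj_minus v).
Proof. move=> x y; by rewrite /adj_minus gadj_sym andbCA. Qed.

Lemma Rv_sym x y : Rv x y = Rv y x.
Proof. by apply: sym_connect_sym; apply: adj_minus_sym. Qed.

Lemma Rv_trans x y z : Rv x y -> Rv y z -> Rv x z.
Proof. exact: connect_trans. Qed.

Lemma gadj_ends (e : rE G) : gadj (ends e).1 (ends e).2.
Proof. by apply/existsP; exists e; rewrite -surjective_pairing eqxx. Qed.

Lemma wv_neq e : wv e != v.
Proof.
rewrite /wv; case: ifP => // /negbFE /eqP h.
by have := loopless HG e; rewrite h eq_sym.
Qed.

Lemma end_R (u : rV G) e : incident u e -> u != v -> Rv u (wv e).
Proof.
rewrite /incident /wv => /orP[] /eqP <- uv; first by rewrite uv connect0.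
case: ifP => h; last by rewrite connect0.
apply: connect1; by rewrite /adj_minus uv h gadj_sym gadj_ends.
Qed.

Lemma Rv_from_nv x y : x != v -> Rv x y -> y != v.
Proof.
move=> xv /connectP[p pth ->]; elim: p x xv pth => //= z p IH x xv /andP[a pth].
apply: IH pth; by case/and3P: a.
Qed.

Lemma IE (w' : rV G) e : w' != v ->
  (e \in induced_E (vcompV v w')) = Rv w' (wv e).
Proof.
move=> wn; rewrite /induced_E /vcompV !inE /wv.
have nl := loopless HG e.
case: (eqVneq (ends e).1 v) => [e1|n1] /=.
  have n2 : (ends e).2 != v by rewrite -e1 eq_sym.
  by rewrite (negbTE n2).
case: (eqVneq (ends e).2 v) => [e2|n2] /=; first by rewrite andbT.
apply/andP/idP => [[] //|r1]; split => //.
apply: (Rv_trans r1); apply: connect1; by rewrite /adj_minus n1 n2 gadj_ends.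
Qed.

Lemma unionE (s : seq (rE G)) : union_E v s = [set e | Pv s (wv e)].
Proof.
apply/setP => e; rewrite inE; apply/bigcupP/idP.
- move=> [C /andP[/imsetP[w' + ->] /hasP[e0 e0s]]]; rewrite inE => wn.
  rewrite !IE // => r0 r.
  apply/hasP; exists e0 => //; apply: (Rv_trans _ r); by rewrite Rv_sym.
- move=> /hasP[e0 e0s r]; exists (vcompV v (wv e0)); last by rewrite IE ?wv_neq.
  apply/andP; split; first by apply/imsetP; exists (wv e0); rewrite ?inE ?wv_neq.
  apply/hasP; exists e0 => //; by rewrite IE ?wv_neq ?connect0.
Qed.

Lemma unionV (s : seq (rE G)) : s != [::] ->
  union_V v s = v |: [set x | (x != v) && Pv s x].
Proof.
move=> sn; apply/setP => x; rewrite !inE; apply/bigcupP/idP.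
- move=> [C /andP[/imsetP[w' + ->] /hasP[e0 e0s]]]; rewrite inE => wn.
  rewrite IE // /vcompV !inE => r0 /orP[->//|/andP[xv r]].
  rewrite xv /=; apply/orP; right; apply/hasP; exists e0 => //.
  apply: (Rv_trans _ r); by rewrite Rv_sym.
- have [e1 e1s] : exists e1, e1 \in s by case: (s) sn => // a l _; exists a; rewrite inE eqxx.
  move=> /orP[/eqP->|/andP[xv /hasP[e0 e0s r]]].
    exists (vcompV v (wv e1)); last by rewrite /vcompV !inE eqxx.
    apply/andP; split; first by apply/imsetP; exists (wv e1); rewrite ?inE ?wv_neq.
    apply/hasP; exists e1 => //; by rewrite IE ?wv_neq ?connect0.
  exists (vcompV v (wv e0)); last by rewrite /vcompV !inE xv r orbT.
  apply/andP; split; first by apply/imsetP; exists (wv e0); rewrite ?inE ?wv_neq.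
  apply/hasP; exists e0 => //; by rewrite IE ?wv_neq ?connect0.
Qed.

Lemma conn_path p x : x != v -> path (@gadj G) x p -> last x p = v ->
  exists y, [/\ y != v, Rv x y & gadj y v].
Proof.
elim: p x => [|z p IH] x xv /=; first by move=> _ e; rewrite e eqxx in xv.
move=> /andP[a pth] l.
case: (eqVneq z v) => [zv|zn].
  by exists x; split => //; rewrite -zv.
have [y [yv r g]] := IH z zn pth l.
exists y; split => //; apply: (Rv_trans _ r); apply: connect1.
by rewrite /adj_minus xv zn.
Qed.

End G2.


Section G3.
Variable G : ribbon_graph.
Hypothesis HG : is_ribbon_graph G.
Variables (v : rV G) (i j : nat) (es : seq (rE G)) (d0 : rE G).
Hypotheses (Hi : (0 < i)%N) (Hj : (0 < j)%N) (Hsz : size es = (i + j)%N)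
  (Hu : uniq es) (Hinc : forall e, incident v e = (e \in es))
  (Hrho : forall (k : nat) (d : rE G), (k < i + j)%N ->
     rho v (nth d es k) = nth d es (k.+1 %% (i + j)))
  (Hsep : forall e1 e2, e1 \in take i es -> e2 \in drop i es ->
     forall C, C \in vcomps v ->
       ~~ ((e1 \in induced_E C) && (e2 \in induced_E C))).

Local Notation n := (i + j)%N.
Local Notation P1 := (Pv v (take i es)).
Local Notation P2 := (Pv v (drop i es)).
Local Notation Rv := (connect (adj_minus v)).

Lemma cover x : x != v -> P1 x || P2 x.
Proof.
move=> xv.
have := (let: And4 _ h _ _ := HG in h) x v.
move=> /connectP[p pth l].
have [y [yv r /existsP[e he]]] := conn_path xv pth (esym l).
have ie : incident v e.
  by rewrite /incident; case/orP: he => /eqP -> /=; rewrite eqxx ?orbT.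
rewrite Hinc -(cat_take_drop i es) mem_cat in ie.
have we : wv v e = y.
  rewrite /wv; case/orP: he => /eqP -> /=; first by rewrite yv.
  by rewrite eqxx.
rewrite /Pv; case/orP: ie => ie; apply/orP; [left|right]; apply/hasP; exists e => //;
  by rewrite we Rv_sym.
Qed.

Lemma excl x : P1 x -> P2 x -> False.
Proof.
move=> /hasP[e1 e1t r1] /hasP[e2 e2d r2].
have := Hsep e1t e2d (C := vcompV v (wv v e1)).
rewrite !IE ?wv_neq // connect0 /=.
have -> : Rv (wv v e1) (wv v e2) by apply: (Rv_trans r1); rewrite Rv_sym.
move=> h; have /h /= // : vcompV v (wv v e1) \in vcomps v by apply/imsetP; exists (wv v e1); rewrite ?inE ?wv_neq.
Qed.

Lemma P2E x : x != v -> P2 x = ~~ P1 x.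
Proof.
move=> xv; have := cover xv; case h1: (P1 x); case h2: (P2 x) => //= _.
by exfalso; exact: excl h1 h2.
Qed.

Definition E1 := union_E v (take i es).
Definition E2 := union_E v (drop i es).

Lemma E2E : E2 = ~: E1.
Proof.
apply/setP => e; rewrite /E1 /E2 !unionE // !inE P2E //; exact: wv_neq.
Qed.

Lemma take_E1 e : e \in take i es -> e \in E1.
Proof. move=> h; rewrite /E1 unionE // inE; apply/hasP; exists e => //; exact: connect0. Qed.

Lemma drop_E2 e : e \in drop i es -> e \in E2.
Proof. move=> h; rewrite /E2 unionE // inE; apply/hasP; exists e => //; exact: connect0. Qed.

Lemma union_rho s (d : rE G * bool) : d.1 \in union_E v s -> dhead d != v ->
  rho (dhead d) d.1 \in union_E v s.
Proof.
rewrite !unionE // !inE => /hasP[e0 e0s r] hv; apply/hasP; exists e0 => //.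
apply: (Rv_trans r); apply: (Rv_trans (y := dhead d)).
  by rewrite Rv_sym; apply: end_R => //; apply: dhead_inc.
apply: end_R => //; apply: rho_inc => //; apply: dhead_inc.
Qed.


Local Notation ek k := (nth d0 es k).

Lemma n_gt0 : (0 < n)%N.
Proof. lia. Qed.

Lemma n_le : (n <= #|rE G|)%N.
Proof. by rewrite -Hsz -(card_uniqP Hu); apply: max_card. Qed.

Lemma ek_iter k m : (k < n)%N -> iter m (rho v) (ek k) = ek ((k + m) %% n).
Proof.
move=> kn; elim: m => [|m IH]; first by rewrite addn0 modn_small.
rewrite iterS IH Hrho ?ltn_pmod ?n_gt0 //.
have -> : ((k + m) %% n).+1 = (k + m) %% n + 1 by rewrite addn1.
by rewrite modnDml addn1 addnS.
Qed.

Lemma ek_take k : (k < i)%N -> ek k \in take i es.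
Proof.
move=> ki; rewrite -(nth_take d0 ki); apply: mem_nth.
have -> : size (take i es) = i by rewrite size_takel // Hsz leq_addr.
done.
Qed.

Lemma ek_drop k : (i <= k)%N -> (k < n)%N -> ek k \in drop i es.
Proof.
move=> ik kn; rewrite -(subnKC ik) -nth_drop; apply: mem_nth.
rewrite size_drop Hsz; lia.
Qed.

Lemma index_es e : e \in es -> exists2 k, (k < n)%N & e = ek k.
Proof.
move=> h; exists (index e es); first by rewrite -Hsz index_mem.
by rewrite nth_index.
Qed.

Lemma ek_inj k l : (k < n)%N -> (l < n)%N -> ek k = ek l -> k = l.
Proof.
move=> kn ln /eqP; rewrite nth_uniq ?Hsz // => /eqP //.
Qed.

Lemma ek_E1 k : (k < i)%N -> ek k \in E1.
Proof. by move=> h; apply: take_E1; apply: ek_take. Qed.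

Lemma ek_E2 k : (i <= k)%N -> (k < n)%N -> ek k \in E2.
Proof. by move=> h1 h2; apply: drop_E2; apply: ek_drop. Qed.

Lemma ek_nE1 k : (i <= k)%N -> (k < n)%N -> ek k \notin E1.
Proof. by move=> h1 h2; have := ek_E2 h1 h2; rewrite E2E inE. Qed.

Lemma ek_nE2 k : (k < i)%N -> ek k \notin E2.
Proof. by move=> h1; have := ek_E1 h1; rewrite E2E inE negbK. Qed.

Definition din (e : rE G) := (e, (ends e).1 == v).

Lemma dhead_v (d : rE G * bool) : dhead d = v -> d = din d.1.
Proof.
case: d => a b; rewrite /dhead /din /=; case: b => h; first by rewrite h eqxx.
have := loopless HG a; rewrite h => nl; by rewrite (negbTE nl).
Qed.

Lemma dhead_din e : incident v e -> dhead (din e) = v.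
Proof.
rewrite /incident /din /dhead /=; case: eqP => //= _ /eqP //.
Qed.

Lemma face_eq (Es1 Es2 : {set rE G}) d1 d2 : dhead d1 = dhead d2 ->
  next_in Es1 (dhead d1) d1.1 = next_in Es2 (dhead d2) d2.1 ->
  face_step Es1 d1 = face_step Es2 d2.
Proof. by rewrite /face_step => -> ->. Qed.

Definition dx := din (ek i.-1).
Definition dy := din (ek n.-1).
Definition fT := face_step [set: rE G].
Definition gT d := if d \in darts_of E1 then face_step E1 d else face_step E2 d.

Lemma ek_inc k : (k < n)%N -> incident v (ek k).
Proof. by move=> h; rewrite Hinc mem_nth ?Hsz. Qed.

Lemma key z : fT z = gT (tperm dx dy z).
Proof.
have hin : (i.-1 < n)%N by lia.
have hnn : (n.-1 < n)%N by lia.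
have hin2 : (i < n)%N by lia.
case: tpermP => [->|->|zx zy].
- have ny : dy \notin darts_of E1 by rewrite inE /= ek_nE1 //; lia.
  rewrite /gT (negbTE ny) /fT; apply: face_eq; rewrite ?dhead_din ?ek_inc //.
  rewrite next_in_rho ?inE // Hrho // prednK // (modn_small hin2).
  rewrite (next_inE (m := i)); first last.
  + move=> m' hm; rewrite ek_iter //.
    have -> : (n.-1 + m'.+1 = m' + n)%N by lia.
    by rewrite modnDr modn_small ?ek_nE2 //; lia.
  + rewrite ek_iter //.
    have -> : (n.-1 + i.+1 = i + n)%N by lia.
    by rewrite modnDr modn_small ?ek_E2 //; lia.
  + by have := n_le; lia.
  rewrite ek_iter //.
  have -> : (n.-1 + i.+1 = i + n)%N by lia.
  by rewrite modnDr modn_small //; lia.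
- have nx : dx \in darts_of E1 by rewrite inE /= ek_E1 //; lia.
  rewrite /gT nx /fT; apply: face_eq; rewrite ?dhead_din ?ek_inc //.
  rewrite next_in_rho ?inE // Hrho // (prednK n_gt0) modnn /=.
  rewrite (next_inE (m := j)); first last.
  + move=> m' hm; rewrite ek_iter //.
    have -> : (i.-1 + m'.+1 = i + m')%N by lia.
    by rewrite modn_small ?ek_nE1 //; lia.
  + rewrite ek_iter //.
    have -> : (i.-1 + j.+1 = n)%N by lia.
    by rewrite modnn ek_E1.
  + by have := n_le; lia.
  rewrite ek_iter //.
  have -> : (i.-1 + j.+1 = n)%N by lia.
  by rewrite modnn.
- rewrite /gT.
  have common : forall Es : {set rE G}, z.1 \in Es -> rho (dhead z) z.1 \in Es ->
      face_step Es z = fT z.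
    move=> Es h1 h2; rewrite /fT; apply: face_eq => //.
    by rewrite !next_in_rho ?inE.
  case hz: (z \in darts_of E1); symmetry; apply: common.
  + by move: hz; rewrite inE.
  + case: (eqVneq (dhead z) v) => [uv|un]; last by apply: union_rho => //; move: hz; rewrite inE.
    have zd := dhead_v uv.
    have := dhead_inc z; rewrite uv Hinc => /index_es[k kn ek1].
    have ki : (k < i)%N.
      case: (ltnP k i) => // ik; move: hz; rewrite inE ek1.
      by rewrite (negbTE (ek_nE1 ik kn)).
    have kx : k != i.-1.
      apply/eqP => kk; apply: zx; by rewrite zd ek1 kk.
    rewrite ek1 Hrho // modn_small; last by lia.
    apply: ek_E1; lia.
  + by rewrite E2E; move: hz; rewrite !inE => ->.
  + case: (eqVneq (dhead z) v) => [uv|un]; last first.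
      by apply: union_rho => //; rewrite -/E2 E2E; move: hz; rewrite !inE => ->.
    have zd := dhead_v uv.
    have := dhead_inc z; rewrite uv Hinc => /index_es[k kn ek1].
    have ki : (i <= k)%N.
      case: (ltnP k i) => // ik; move: hz; rewrite inE ek1.
      by rewrite (ek_E1 ik).
    have kx : k != n.-1.
      apply/eqP => kk; apply: zy; by rewrite zd ek1 kk.
    rewrite ek1 Hrho // modn_small; last by lia.
    apply: ek_E2; lia.
Qed.

Lemma fT_inj : injective fT.
Proof. exact: face_inj. Qed.

Lemma gT_eq z : gT z = fT (tperm dx dy z).
Proof. by rewrite key tpermK. Qed.

Lemma gT_inj : injective gT.
Proof.
move=> a b; rewrite !gT_eq => /fT_inj; exact: (can_inj (tpermK dx dy)).
Qed.

Definition pf := perm fT_inj.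
Definition pg := perm gT_inj.

Lemma pf_eq : pf = (tperm dx dy * pg)%g.
Proof. by apply/permP => z; rewrite permM /pf /pg (permE fT_inj) (permE gT_inj) key. Qed.

Local Notation A1 := (darts_of E1).

Lemma darts2 : darts_of E2 = ~: A1.
Proof. by apply/setP => d; rewrite !inE E2E inE. Qed.

Lemma hA1 : {in A1, forall x, pg x \in A1}.
Proof. by move=> d hd; rewrite permE /gT hd; apply: face_step_darts. Qed.

Lemma hA2 : {in ~: A1, forall x, pg x \in ~: A1}.
Proof.
move=> d hd; rewrite permE /gT; move: (hd); rewrite inE => /negbTE ->.
by rewrite -darts2; apply: face_step_darts; rewrite darts2.
Qed.

Lemma not_orb : dx \notin porbit pg dy.
Proof.
apply/porbitP => -[k e].
have dyA : dy \in ~: A1 by rewrite !inE /= ek_nE1 //; lia.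
have [_ h] := iter_agree (h := pg) (h' := pg) (fun _ _ => erefl) hA2 k dyA.
have dxA : dx \in A1 by rewrite inE /= ek_E1 //; lia.
by move: h; rewrite -permX -e inE dxA.
Qed.

Lemma dxy : dx != dy.
Proof.
apply/negP => /eqP/(congr1 fst) /= /ek_inj h.
have : i.-1 = n.-1 by apply: h; lia.
lia.
Qed.

Lemma cyc_eq : (#|porbits pf| + 2 = #|porbits pg| + 1)%N.
Proof.
have := porbits_mul_tperm pg dx dy; rewrite /= -pf_eq not_orb dxy /=; lia.
Qed.

Lemma ncyclesE (Es : {set rE G}) : Es != set0 ->
  ncycles Es = #|Orb (face_step Es) (darts_of Es)|.
Proof. by move=> h; rewrite /ncycles (negbTE h). Qed.

Lemma ncT : ncycles [set: rE G] = #|porbits pf|.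
Proof.
rewrite ncyclesE; last by apply/set0Pn; exists d0; rewrite inE.
rewrite -(@Orb_permA _ pf (darts_of [set: rE G])); last by move=> d; rewrite !inE.
rewrite (@Orb_agree _ (face_step [set: rE G]) pf) // => d _; last by rewrite !inE.
by rewrite permE.
Qed.

Lemma nc1 : ncycles E1 = #|Orb pg A1|.
Proof.
rewrite ncyclesE; last by apply/set0Pn; exists (ek 0); apply: ek_E1.
rewrite (@Orb_agree _ (face_step E1) pg) // => d hd; last exact: face_step_darts.
by rewrite permE /gT hd.
Qed.

Lemma nc2 : ncycles E2 = #|Orb pg (~: A1)|.
Proof.
rewrite ncyclesE; last by apply/set0Pn; exists (ek n.-1); apply: ek_E2; lia.
rewrite darts2 (@Orb_agree _ (face_step E2) pg) // => d hd.
  by rewrite permE /gT; move: (hd); rewrite inE => /negbTE ->.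
by rewrite -darts2; apply: face_step_darts; rewrite darts2.
Qed.

Lemma cyc_total : (ncycles [set: rE G] + 1 = ncycles E1 + ncycles E2)%N.
Proof.
have := cyc_eq; rewrite (Orb_split hA1 hA2) -ncT -nc1 -nc2. lia.
Qed.

Lemma edges_total : #|[set: rE G]| = (#|E1| + #|E2|)%N.
Proof. by rewrite E2E cardsC cardsT. Qed.

Definition S1 := [set x | (x != v) && P1 x].
Definition S2 := [set x | (x != v) && P2 x].

Lemma V1E : union_V v (take i es) = v |: S1.
Proof.
apply: unionV => //; apply/negP => /eqP h.
by have := size_take i es; rewrite h /= Hsz; case: ifP => _; lia.
Qed.

Lemma V2E : union_V v (drop i es) = v |: S2.
Proof.
apply: unionV => //; apply/negP => /eqP h.
by have := size_drop i es; rewrite h /= Hsz; lia.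
Qed.

Lemma verts_total : (#|[set: rV G]| + 1 =
  #|union_V v (take i es)| + #|union_V v (drop i es)|)%N.
Proof.
rewrite V1E V2E !cardsU1 !inE !eqxx /=.
have h := cardsID [set x | P1 x] [set~ v].
have e1 : [set~ v] :&: [set x | P1 x] = S1 by apply/setP => x; rewrite !inE.
have e2 : [set~ v] :\: [set x | P1 x] = S2.
  apply/setP => x; rewrite !inE; case: (eqVneq x v) => [->|xv]; rewrite ?eqxx ?andbF //= ?andbT ?P2E //.
rewrite e1 e2 cardsC1 in h.
have : (0 < #|rV G|)%N by apply/card_gt0P; exists v.
rewrite cardsT; lia.
Qed.

End G3.

Unset Implicit Arguments. Set Strict Implicit.
Import GRing.Theory Num.Theory.

Theorem lemma4p6 (G : ribbon_graph) (v : rV G) (i j : nat) (es : seq (rE G)) :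
  is_ribbon_graph G ->
  (0 < i)%N -> (0 < j)%N ->
  (* rho_v = (e_1, ..., e_(i+j)) *)
  size es = (i + j)%N -> uniq es ->
  (forall e, incident v e = (e \in es)) ->
  (forall (k : nat) (d : rE G), (k < i + j)%N ->
     rho v (nth d es k) = nth d es (k.+1 %% (i + j))) ->
  (* e_k (k <= i) and e_l (l > i) lie in different v-components *)
  (forall e1 e2, e1 \in take i es -> e2 \in drop i es ->
     forall C, C \in vcomps v ->
       ~~ ((e1 \in induced_E C) && (e2 \in induced_E C))) ->
  (genus G = genus_sub (union_V v (take i es)) (union_E v (take i es))
          + genus_sub (union_V v (drop i es)) (union_E v (drop i es)))%R.
Proof.
move=> HG Hi Hj Hsz Hu Hinc Hrho Hsep.
have d0 : rE G.
  by case: (es) Hsz => [|a l] /=; [move=> h; exfalso; lia | move=> _; exact: a].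
have hc := cyc_total HG d0 Hi Hj Hsz Hu Hinc Hrho Hsep.
have he := edges_total HG Hinc Hsep.
have hv := verts_total HG Hi Hj Hsz Hu Hinc Hsep.
rewrite /E1 /E2 in hc he.
rewrite /genus /genus_sub.
move: hc he hv.
set c := ncycles _; set c1 := ncycles _; set c2 := ncycles _.
set a := #|[set: rV G]|; set a1 := #|union_V _ _|; set a2 := #|union_V _ _|.
set b := #|[set: rE G]|; set b1 := #|union_E _ _|; set b2 := #|union_E _ _|.
move=> /(congr1 (fun m => m%:R : rat)) hc /(congr1 (fun m => m%:R : rat)) he
  /(congr1 (fun m => m%:R : rat)) hv.
rewrite /= !natrD in hc he hv.
lra.
Qed.
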